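(* Let $W_{10}^l,W_{20}^l$ ($l\in[L]$) have i.i.d. $\mathcal N(0,1)$ entries, and (on the event $\|W_{10}^l\|\le c_{10}\sqrt n$, $\|W_{20}^l\|\le c_{20}\sqrt m$ for all $l$, with $c_{10}=1+2\sqrt m/\sqrt n$, $c_{20}=3$) let $\mathbf W_1\in B(\mathbf W_{10},R_1)$, $\mathbf W_2\in B(\mathbf W_{20},R_2)$. Then for every $l\in[L]$: for LISTA, $\|\mathbf x^l\|\le c^l_{\mathrm{ISTA};\mathbf x}$; for ADMM-CSNet, $\|\mathbf z^l\|\le c^l_{\mathrm{ADMM};\mathbf z}$ and $\|\mathbf u^l\|\le c^l_{\mathrm{ADMM};\mathbf u}$, where $c^0_{\mathrm{ISTA};\mathbf x}=\sqrt m C_x$, $c^0_{\mathrm{ADMM};\mathbf z}=\sqrt m C_z$, $c^0_{\mathrm{ADMM};\mathbf u}=\sqrt m C_u$ and $$c^l_{\mathrm{ISTA};\mathbf x}=L_\sigma\Big(c_{10}+\tfrac{R_1}{\sqrt n}\Big)\sqrt nC_y+L_\sigma\Big(c_{20}+\tfrac{R_2}{\sqrt m}\Big)c^{l-1}_{\mathrm{ISTA};\mathbf x}+\sigma(0)=O(\sqrt m),$$ $$c^l_{\mathrm{ADMM};\mathbf z}=L_\sigma\Big(c_{10}+\tfrac{R_1}{\sqrt n}\Big)\sqrt nC_y+L_\sigma\Big(c_{20}+\tfrac{R_2}{\sqrt m}\Big)c^{l-1}_{\mathrm{ADMM};\mathbf z}+L_\sigma\Big(1+c_{20}+\tfrac{R_2}{\sqrt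 m}\Big)c^{l-1}_{\mathrm{ADMM};\mathbf u}+\sigma(0)=O(\sqrt m),$$ $$c^l_{\mathrm{ADMM};\mathbf u}=\Big(c_{10}+\tfrac{R_1}{\sqrt n}\Big)\sqrt nC_y+\Big(c_{20}+\tfrac{R_2}{\sqrt m}\Big)c^{l-1}_{\mathrm{ADMM};\mathbf z}+\Big(c_{20}+\tfrac{R_2}{\sqrt m}+1\Big)c^{l-1}_{\mathrm{ADMM};\mathbf u}+c^l_{\mathrm{ADMM};\mathbf z}=O(\sqrt m).$$
   Context: Fix $L,n,m\ge1$, $\lambda>0$ and $\sigma(x)=\log(1+e^{x-\lambda})-\log(1+e^{-x-\lambda})$ (componentwise), $L_\sigma$-Lipschitz. Input $\mathbf y\in\mathbb R^n$ with $|y_i|\le C_y$. Parameters $W_1^l\in\mathbb R^{m\times n}$, $W_2^l\in\mathbb R^{m\times m}$; $\mathbf W_1=(W_1^l)_{l}$, $\mathbf W_2=(W_2^l)_l$, initial values $\mathbf W_{10},\mathbf W_{20}$; $B(\mathbf W_{10},R_1)=\{\mathbf W_1:\|\mathbf W_1-\mathbf W_{10}\|_F\le R_1\}$ (Frobenius over all entries), similarly for $\mathbf W_2$. LISTA: $\mathbf x^0$ with $|x^0_i|\le C_x$, $\mathbf x^l=\sigma\big(\frac1{\sqrt n}W_1^l\mathbf y+\frac1{\sqrt m}W_2^l\mathbf x^{l-1}\big)$. ADMM-CSNet: $\mathbf z^0,\mathbf u^0$ with $|z^0_i|\le C_z$, $|u^0_i|\le C_u$; $\mathbf x^l=\frac1{\sqrt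 n}W_1^l\mathbf y+\frac1{\sqrt m}W_2^l(\mathbf z^{l-1}-\mathbf u^{l-1})$, $\mathbf z^l=\sigma(\mathbf x^l+\mathbf u^{l-1})$, $\mathbf u^l=\mathbf u^{l-1}+\mathbf x^l-\mathbf z^l$. $\|\cdot\|$ is the Euclidean norm; $O(\cdot)$ is with respect to $m$. *)

(* Defs.v *)
From HB Require Import structures.
From mathcomp Require Import all_boot all_order all_algebra.
From mathcomp Require Import all_classical all_reals all_analysis.
Set Implicit Arguments. Unset Strict Implicit. Unset Printing Implicit Defensive.
Import Order.TTheory GRing.Theory Num.Theory.
Local Open Scope ring_scope.

Section Defs.
Variable R : realType.

Definition sigma (lam x : R) : R :=
  ln (1 + expR (x - lam)) - ln (1 + expR (- x - lam)).

Definition sigv (lam : R) (k : nat) (v : 'cV[R]_k) : 'cV[R]_k :=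
  map_mx (sigma lam) v.

Definition vnorm (k : nat) (v : 'cV[R]_k) : R :=
  Num.sqrt (\sum_(i < k) v i 0 ^+ 2).

Definition rs (k : nat) : R := Num.sqrt (k%:R).

Definition opnorm_le (p q : nat) (W : 'M[R]_(p, q)) (K : R) : Prop :=
  forall v : 'cV[R]_q, vnorm (W *m v) <= K * vnorm v.

Definition frobL (p q : nat) (Ws : nat -> 'M[R]_(p, q)) (L : nat) : R :=
  Num.sqrt (\sum_(1 <= l < L.+1) \sum_(i < p) \sum_(j < q) Ws l i j ^+ 2).

Fixpoint lista (lam : R) (n m : nat) (y : 'cV[R]_n)
    (W1 : nat -> 'M[R]_(m, n)) (W2 : nat -> 'M[R]_(m, m)) (x0 : 'cV[R]_m)
    (l : nat) : 'cV[R]_m :=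
  match l with
  | 0 => x0
  | l'.+1 => sigv lam ((rs n)^-1 *: (W1 l'.+1 *m y)
                       + (rs m)^-1 *: (W2 l'.+1 *m lista lam y W1 W2 x0 l'))
  end.

Fixpoint admm (lam : R) (n m : nat) (y : 'cV[R]_n)
    (W1 : nat -> 'M[R]_(m, n)) (W2 : nat -> 'M[R]_(m, m)) (z0 u0 : 'cV[R]_m)
    (l : nat) : 'cV[R]_m * 'cV[R]_m :=
  match l with
  | 0 => (z0, u0)
  | l'.+1 =>
      let zu := admm lam y W1 W2 z0 u0 l' in
      let x := (rs n)^-1 *: (W1 l'.+1 *m y) + (rs m)^-1 *: (W2 l'.+1 *m (zu.1 - zu.2)) in
      let z := sigv lam (x + zu.2) in
      (z, zu.2 + x - z)
  end.

Definition c10 (n m : nat) : R := 1 + 2 * rs m / rs n.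
Definition c20 : R := 3.

Fixpoint c_ista (lam Lsig Cy Cx R1 R2 : R) (n m : nat) (l : nat) : R :=
  match l with
  | 0 => rs m * Cx
  | l'.+1 => Lsig * (c10 n m + R1 / rs n) * rs n * Cy
             + Lsig * (c20 + R2 / rs m) * c_ista lam Lsig Cy Cx R1 R2 n m l'
             + sigma lam 0
  end.

Fixpoint c_admm (lam Lsig Cy Cz Cu R1 R2 : R) (n m : nat) (l : nat) : R * R :=
  match l with
  | 0 => (rs m * Cz, rs m * Cu)
  | l'.+1 =>
      let c := c_admm lam Lsig Cy Cz Cu R1 R2 n m l' in
      let cz := Lsig * (c10 n m + R1 / rs n) * rs n * Cy
                + Lsig * (c20 + R2 / rs m) * c.1
                + Lsig * (1 + c20 + R2 / rs m) * c.2
                + sigma lam 0 in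
      (cz, (c10 n m + R1 / rs n) * rs n * Cy
           + (c20 + R2 / rs m) * c.1
           + (c20 + R2 / rs m + 1) * c.2
           + cz)
  end.

End Defs.

(* Main.v *)
Require Import Defs.
From HB Require Import structures.
From mathcomp Require Import all_boot all_order all_algebra.
From mathcomp Require Import all_classical all_reals all_analysis.
From mathcomp Require Import lra ring.
Import Order.TTheory GRing.Theory Num.Theory.
Set Implicit Arguments. Unset Strict Implicit.
Local Open Scope ring_scope.

Section Helpers.
Variable R : realType.

Lemma CS k (a b : 'I_k -> R) :
  (\sum_i a i * b i) ^+ 2 <= (\sum_i a i ^+ 2) * (\sum_i b i ^+ 2).
Proof.
have H0 : 0 <= \sum_i \sum_j (a i * b j - a j * b i) ^+ 2.
  by apply: sumr_ge0 => i _; apply: sumr_ge0 => j _; apply: sqr_ge0.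
have E : \sum_i \sum_j (a i * b j - a j * b i) ^+ 2 =
   \sum_i \sum_j (a i ^+ 2 * b j ^+ 2) + \sum_i \sum_j (a j ^+ 2 * b i ^+ 2)
   - 2 * \sum_i \sum_j (a i * b i * (a j * b j)).
  rewrite mulr_sumr -big_split -sumrB /=; apply: eq_bigr => i _.
  rewrite mulr_sumr -big_split -sumrB /=; apply: eq_bigr => j _.
  ring.
have E1 : \sum_i \sum_j (a j ^+ 2 * b i ^+ 2) = \sum_i \sum_j (a i ^+ 2 * b j ^+ 2).
  by rewrite exchange_big.
have E2 : \sum_i \sum_j (a i ^+ 2 * b j ^+ 2) = (\sum_i a i ^+ 2) * (\sum_i b i ^+ 2).
  by rewrite mulr_suml; apply: eq_bigr => i _; rewrite mulr_sumr.
have E3 : \sum_i \sum_j (a i * b i * (a j * b j)) = (\sum_i a i * b i) ^+ 2.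
  by rewrite expr2 mulr_suml; apply: eq_bigr => i _; rewrite mulr_sumr.
move: H0; rewrite E E1 E2 E3. lra.
Qed.

Lemma vnorm_ge0 k (v : 'cV[R]_k) : 0 <= vnorm v.
Proof. exact: sqrtr_ge0. Qed.

Lemma sqrt_le_of (x y : R) : 0 <= y -> x <= y ^+ 2 -> Num.sqrt x <= y.
Proof.
move=> hy hxy; rewrite -(ger0_norm hy) -sqrtr_sqr ler_sqrt //; exact: sqr_ge0.
Qed.

Lemma sum_sqr_ge0 k (v : 'I_k -> R) : 0 <= \sum_i v i ^+ 2.
Proof. by apply: sumr_ge0 => i _; apply: sqr_ge0. Qed.

Lemma vnorm_sqr k (v : 'cV[R]_k) : vnorm v ^+ 2 = \sum_i v i 0 ^+ 2.
Proof. by rewrite /vnorm sqr_sqrtr // sum_sqr_ge0. Qed.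

Lemma dot_le k (u v : 'cV[R]_k) : \sum_i u i 0 * v i 0 <= vnorm u * vnorm v.
Proof.
apply: le_trans (ler_norm _) _.
rewrite -sqrtr_sqr /vnorm -sqrtrM ?sum_sqr_ge0 // ler_sqrt; last first.
  by apply: mulr_ge0; apply: sum_sqr_ge0.
exact: CS.
Qed.

Lemma vnormD k (u v : 'cV[R]_k) : vnorm (u + v) <= vnorm u + vnorm v.
Proof.
apply: sqrt_le_of; first by apply: addr_ge0; apply: vnorm_ge0.
have -> : \sum_i (u + v) i 0 ^+ 2 = \sum_i u i 0 ^+ 2 + \sum_i v i 0 ^+ 2
           + 2 * \sum_i u i 0 * v i 0.
  rewrite mulr_sumr -!big_split /=; apply: eq_bigr => i _; rewrite mxE; ring.
rewrite -!vnorm_sqr; have := dot_le u v; lra.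
Qed.

Lemma vnormZ k (c : R) (v : 'cV[R]_k) : vnorm (c *: v) = `|c| * vnorm v.
Proof.
rewrite /vnorm -sqrtr_sqr -sqrtrM ?sqr_ge0 // mulr_sumr; congr Num.sqrt.
by apply: eq_bigr => i _; rewrite mxE; ring.
Qed.

Lemma vnormN k (v : 'cV[R]_k) : vnorm (- v) = vnorm v.
Proof. by rewrite -scaleN1r vnormZ normrN normr1 mul1r. Qed.

Lemma vnormB k (u v : 'cV[R]_k) : vnorm (u - v) <= vnorm u + vnorm v.
Proof. by rewrite -(vnormN v); apply: vnormD. Qed.

Lemma vnorm_const k (v : 'cV[R]_k) C : 0 <= C -> (forall i, `|v i 0| <= C) ->
  vnorm v <= rs R k * C.
Proof.
move=> hC hv; apply: sqrt_le_of; first by apply: mulr_ge0 => //; apply: sqrtr_ge0.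
rewrite exprMn /rs sqr_sqrtr ?ler0n //.
apply: le_trans (_ : \sum_(i < k) C ^+ 2 <= _).
  apply: ler_sum => i _; have := hv i; rewrite ler_norml => /andP[h1 h2]; nra.
by rewrite sumr_const card_ord mulr_natl.
Qed.

Lemma mulmx_bound p q (A : 'M[R]_(p, q)) (v : 'cV[R]_q) :
  vnorm (A *m v) <= Num.sqrt (\sum_i \sum_j A i j ^+ 2) * vnorm v.
Proof.
apply: sqrt_le_of; first by apply: mulr_ge0; apply: sqrtr_ge0.
rewrite exprMn sqr_sqrtr; last by apply: sumr_ge0 => i _; apply: sum_sqr_ge0.
rewrite vnorm_sqr mulr_suml; apply: ler_sum => i _; rewrite mxE.
exact: (CS (fun j => A i j) (fun j => v j 0)).
Qed.

Lemma frob_layer p q (Ws : nat -> 'M[R]_(p, q)) L l : (1 <= l <= L)%N ->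
  Num.sqrt (\sum_i \sum_j Ws l i j ^+ 2) <= frobL Ws L.
Proof.
move=> hl; rewrite /frobL ler_sqrt; last first.
  by apply: sumr_ge0 => l' _; apply: sumr_ge0 => i _; apply: sum_sqr_ge0.
rewrite (bigD1_seq l) /=; last by apply: iota_uniq.
  rewrite lerDl; apply: sumr_ge0 => l' _; apply: sumr_ge0 => i _; apply: sum_sqr_ge0.
by rewrite mem_index_iota ltnS.
Qed.

Lemma W_bound p q (W W0 : 'M[R]_(p, q)) K Rr (v : 'cV[R]_q) :
  opnorm_le W0 K -> Num.sqrt (\sum_i \sum_j (W - W0) i j ^+ 2) <= Rr ->
  vnorm (W *m v) <= (K + Rr) * vnorm v.
Proof.
move=> h0 hR.
have -> : W = W0 + (W - W0) by rewrite addrC subrK.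
rewrite mulmxDl; apply: le_trans (vnormD _ _) _.
rewrite mulrDl lerD //.
apply: le_trans (mulmx_bound _ _) _.
by apply: ler_wpM2r => //; apply: vnorm_ge0.
Qed.

Lemma sigma0 (lam : R) : sigma lam 0 = 0.
Proof. by rewrite /sigma oppr0 subrr. Qed.

Lemma sigv_bound (lam Lsig : R) k (v : 'cV[R]_k) :
  (forall a b : R, `|sigma lam a - sigma lam b| <= Lsig * `|a - b|) ->
  vnorm (sigv lam v) <= Lsig * vnorm v.
Proof.
move=> hL.
have hL0 : 0 <= Lsig.
  have := hL 1 0; rewrite subr0 normr1 mulr1 => h; exact: le_trans (normr_ge0 _) h.
apply: sqrt_le_of; first by apply: mulr_ge0 => //; apply: vnorm_ge0.
rewrite exprMn vnorm_sqr mulr_sumr; apply: ler_sum => i _; rewrite mxE.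
have := hL (v i 0) 0; rewrite sigma0 !subr0 => h.
have h1 : 0 <= `|sigma lam (v i 0)| by [].
rewrite -[sigma _ _ ^+ 2]real_normK ?num_real // -[v i 0 ^+ 2]real_normK ?num_real //.
have h2 : 0 <= `|v i 0| by [].
nra.
Qed.

End Helpers.

Section Part1.
Variable R : realType.

Lemma part1 (L n : nat) (lam Lsig Cy Cx Cz Cu R1 R2 : R) :
  (1 <= n)%N ->
  (forall a b : R, `|sigma lam a - sigma lam b| <= Lsig * `|a - b|) ->
  (forall (m : nat), (1 <= m)%N ->
   forall (y : 'cV[R]_n) (x0 z0 u0 : 'cV[R]_m)
          (W10 W1 : nat -> 'M[R]_(m, n)) (W20 W2 : nat -> 'M[R]_(m, m)),
   (forall i, `|y i 0| <= Cy) ->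
   (forall i, `|x0 i 0| <= Cx) ->
   (forall i, `|z0 i 0| <= Cz) ->
   (forall i, `|u0 i 0| <= Cu) ->
   (forall l, (1 <= l <= L)%N -> opnorm_le (W10 l) (c10 R n m * rs R n)) ->
   (forall l, (1 <= l <= L)%N -> opnorm_le (W20 l) (c20 R * rs R m)) ->
   frobL (fun l => W1 l - W10 l) L <= R1 ->
   frobL (fun l => W2 l - W20 l) L <= R2 ->
   forall l, (1 <= l <= L)%N ->
     vnorm (lista lam y W1 W2 x0 l) <= c_ista lam Lsig Cy Cx R1 R2 n m l /\
     vnorm (admm lam y W1 W2 z0 u0 l).1 <= (c_admm lam Lsig Cy Cz Cu R1 R2 n m l).1 /\
     vnorm (admm lam y W1 W2 z0 u0 l).2 <= (c_admm lam Lsig Cy Cz Cu R1 R2 n m l).2).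
Proof.
move=> hn hL.
have hL0 : 0 <= Lsig.
  have := hL 1 0; rewrite subr0 normr1 mulr1 => h; exact: le_trans (normr_ge0 _) h.
have rsn : 0 < rs R n by rewrite /rs sqrtr_gt0 ltr0n.
move=> m hm y x0 z0 u0 W10 W1 W20 W2 hy hx hz hu hW10 hW20 hR1 hR2.
have rsm : 0 < rs R m by rewrite /rs sqrtr_gt0 ltr0n.
have hCy : 0 <= Cy := le_trans (normr_ge0 _) (hy (Ordinal hn)).
have hCx : 0 <= Cx := le_trans (normr_ge0 _) (hx (Ordinal hm)).
have hCz : 0 <= Cz := le_trans (normr_ge0 _) (hz (Ordinal hm)).
have hCu : 0 <= Cu := le_trans (normr_ge0 _) (hu (Ordinal hm)).
have hR10 : 0 <= R1 := le_trans (sqrtr_ge0 _) hR1.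
have hR20 : 0 <= R2 := le_trans (sqrtr_ge0 _) hR2.
have hc10 : 0 <= c10 R n m.
  rewrite /c10; apply: addr_ge0 => //; apply: divr_ge0; last exact: ltW.
  by apply: mulr_ge0 => //; apply: ltW.
have hB : 0 <= c20 R + R2 / rs R m.
  by rewrite /c20; apply: addr_ge0 => //; apply: divr_ge0 => //; apply: ltW.
have hyb : forall l, (1 <= l <= L)%N ->
   vnorm ((rs R n)^-1 *: (W1 l *m y)) <= (c10 R n m + R1 / rs R n) * rs R n * Cy.
  move=> l hl.
  have hF : Num.sqrt (\sum_i \sum_j (W1 l - W10 l) i j ^+ 2) <= R1 :=
    le_trans (frob_layer (fun l => W1 l - W10 l) hl) hR1.
  have h := W_bound y (hW10 l hl) hF.
  rewrite vnormZ ger0_norm; last by rewrite invr_ge0 ltW.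
  have -> : (c10 R n m + R1 / rs R n) * rs R n * Cy =
            (rs R n)^-1 * ((c10 R n m * rs R n + R1) * (rs R n * Cy)).
    by field; rewrite gt_eqF.
  rewrite ler_pM2l ?invr_gt0 //.
  apply: (le_trans h); apply: ler_wpM2l.
    by apply: addr_ge0 => //; apply: mulr_ge0 => //; apply: ltW.
  exact: vnorm_const.
have hxb : forall l (x : 'cV[R]_m), (1 <= l <= L)%N ->
   vnorm ((rs R m)^-1 *: (W2 l *m x)) <= (c20 R + R2 / rs R m) * vnorm x.
  move=> l x hl.
  have hF : Num.sqrt (\sum_i \sum_j (W2 l - W20 l) i j ^+ 2) <= R2 :=
    le_trans (frob_layer (fun l => W2 l - W20 l) hl) hR2.
  have h := W_bound x (hW20 l hl) hF.
  rewrite vnormZ ger0_norm; last by rewrite invr_ge0 ltW.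
  have -> : (c20 R + R2 / rs R m) * vnorm x =
            (rs R m)^-1 * ((c20 R * rs R m + R2) * vnorm x).
    by field; rewrite gt_eqF.
  by rewrite ler_pM2l ?invr_gt0.
suff H : forall l, (l <= L)%N ->
     vnorm (lista lam y W1 W2 x0 l) <= c_ista lam Lsig Cy Cx R1 R2 n m l /\
     vnorm (admm lam y W1 W2 z0 u0 l).1 <= (c_admm lam Lsig Cy Cz Cu R1 R2 n m l).1 /\
     vnorm (admm lam y W1 W2 z0 u0 l).2 <= (c_admm lam Lsig Cy Cz Cu R1 R2 n m l).2.
  by move=> l /andP[_ hl]; exact: H.
elim=> [|l IH] hl.
  by rewrite /=; split; [|split]; apply: vnorm_const.
have hl' : (1 <= l.+1 <= L)%N by rewrite hl.
have [IH1 [IH2 IH3]] := IH (ltnW hl).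
split.
  rewrite /= sigma0 addr0.
  apply: (le_trans (sigv_bound _ hL)).
  set a := (rs R n)^-1 *: _; set b := (rs R m)^-1 *: _.
  have e1 := vnormD a b.
  have e2 := hyb _ hl'.
  have e3 := hxb _ (lista lam y W1 W2 x0 l) hl'.
  have e4 := ler_wpM2l hB IH1.
  set A := (c10 R n m + R1 / rs R n) * rs R n * Cy in e2 *.
  set B := c20 R + R2 / rs R m in e3 e4 *.
  have : vnorm (a + b) <= A + B * c_ista lam Lsig Cy Cx R1 R2 n m l by lra.
  by move/(ler_wpM2l hL0); rewrite /A /B; lra.
move: IH2 IH3.
case E: (admm lam y W1 W2 z0 u0 l) => [z u].
case Ec: (c_admm lam Lsig Cy Cz Cu R1 R2 n m l) => [cz cu] /= IH2 IH3.
rewrite E Ec /= sigma0 addr0.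
set x := (rs R n)^-1 *: _ + _.
have hxn : vnorm x <= (c10 R n m + R1 / rs R n) * rs R n * Cy
                      + (c20 R + R2 / rs R m) * (cz + cu).
  have e1 := vnormD ((rs R n)^-1 *: (W1 l.+1 *m y)) ((rs R m)^-1 *: (W2 l.+1 *m (z - u))).
  have e2 := hyb _ hl'.
  have e3 := hxb _ (z - u) hl'.
  have e5 := vnormB z u.
  have e4 : (c20 R + R2 / rs R m) * vnorm (z - u) <= (c20 R + R2 / rs R m) * (cz + cu).
    apply: ler_wpM2l => //; apply: (le_trans e5); exact: lerD.
  rewrite /x; lra.
have hz' : vnorm (sigv lam (x + u)) <=
   Lsig * ((c10 R n m + R1 / rs R n) * rs R n * Cy
                      + (c20 R + R2 / rs R m) * (cz + cu) + cu).
  apply: (le_trans (sigv_bound _ hL)); apply: ler_wpM2l => //.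
  apply: (le_trans (vnormD _ _)); exact: lerD.
split.
  apply: (le_trans hz'); lra.
apply: (le_trans (vnormB _ _)).
have e6 := vnormD u x.
lra.
Qed.
End Part1.

Section Part2.
Variable R : realType.

Lemma absM_le (a b A B : R) : `|a| <= A -> `|b| <= B -> `|a * b| <= A * B.
Proof. by move=> ha hb; rewrite normrM; apply: ler_pM. Qed.

Lemma rs_ge1 m : (1 <= m)%N -> 1 <= rs R m.
Proof. by move=> hm; rewrite /rs -[X in X <= _]sqrtr1 ler_sqrt ?ler0n // ler1n. Qed.

Lemma part2 (n : nat) (lam Lsig Cy Cx Cz Cu R1 R2 : R) : (1 <= n)%N ->
  forall l, exists K : R, 0 <= K /\ forall m : nat, (1 <= m)%N ->
     `|c_ista lam Lsig Cy Cx R1 R2 n m l| <= K * rs R m /\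
     `|(c_admm lam Lsig Cy Cz Cu R1 R2 n m l).1| <= K * rs R m /\
     `|(c_admm lam Lsig Cy Cz Cu R1 R2 n m l).2| <= K * rs R m.
Proof.
move=> hn.
have rsn : 0 < rs R n by rewrite /rs sqrtr_gt0 ltr0n.
elim=> [|l [K [hK IH]]].
  exists (`|Cx| + `|Cz| + `|Cu|); split; first by rewrite !addr_ge0.
  move=> m hm; have rsm := rs_ge1 hm.
  rewrite /= !normrM (ger0_norm (sqrtr_ge0 _)) ![rs R m * _]mulrC.
  split; [|split]; apply: ler_wpM2r; (try by apply: sqrtr_ge0);
   have := normr_ge0 Cx; have := normr_ge0 Cz; have := normr_ge0 Cu; lra.
set P := (rs R n + 2 + `|R1|) * `|Cy|.
set Q := 3 + `|R2|.
set Lp := `|Lsig|.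
have hP : 0 <= P by rewrite /P; apply: mulr_ge0 => //; rewrite !addr_ge0 // ltW.
have hQ : 0 <= Q by rewrite /Q addr_ge0.
have hLp : 0 <= Lp by rewrite /Lp.
exists ((1 + Lp) * (P + (2 * Q + 1) * K)); split.
  apply: mulr_ge0; first by rewrite addr_ge0.
  by apply: addr_ge0 => //; apply: mulr_ge0 => //; rewrite addr_ge0 // mulr_ge0.
move=> m hm; have rsm := rs_ge1 hm.
have rsm0 : 0 < rs R m by apply: lt_le_trans rsm.
have [IH1 [IH2 IH3]] := IH m hm.
set t1 := (c10 R n m + R1 / rs R n) * rs R n * Cy.
set B := c20 R + R2 / rs R m.
have ht1 : `|t1| <= P * rs R m.
  have -> : t1 = (rs R n + 2 * rs R m + R1) * Cy.
    by rewrite /t1 /c10; field; rewrite gt_eqF.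
  rewrite /P mulrAC; apply: absM_le => //.
  apply: (le_trans (ler_normD _ _)).
  have h1 := normr_ge0 R1.
  have h2 : 0 <= (rs R m - 1) * rs R n by apply: mulr_ge0; lra.
  have h3 : 0 <= (rs R m - 1) * `|R1| by apply: mulr_ge0; lra.
  have h4 : `|rs R n + 2 * rs R m| <= rs R n + 2 * rs R m.
    by rewrite ger0_norm //; apply: addr_ge0; [apply: ltW| apply: mulr_ge0 => //; lra].
  lra.
have hB : `|B| <= Q.
  rewrite /B /Q /c20; apply: (le_trans (ler_normD _ _)).
  rewrite normrM normfV (ger0_norm (ltW rsm0)) (ger0_norm (ler0n _ 3)) lerD2l.
  rewrite ler_pdivrMr //.
  have h1 := normr_ge0 R2.
  have h3 : 0 <= (rs R m - 1) * `|R2| by apply: mulr_ge0; lra.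
  lra.
have hB1 : `|1 + B| <= 1 + Q.
  by apply: (le_trans (ler_normD _ _)); rewrite normr1 lerD2l.
have hB1' : `|B + 1| <= Q + 1 by rewrite addrC (addrC Q).
have hKm : 0 <= K * rs R m by apply: mulr_ge0 => //; apply: ltW.
have f1 : 0 <= P * rs R m by apply: mulr_ge0 => //; apply: ltW.
have f2 : 0 <= Q * (K * rs R m) by apply: mulr_ge0.
have f3 : 0 <= Lp * (K * rs R m) by apply: mulr_ge0.
have f4 : 0 <= Lp * (Q * (K * rs R m)) by apply: mulr_ge0.
have f5 : 0 <= Lp * (P * rs R m) by apply: mulr_ge0.
have gc := absM_le hB IH1.
have gz := absM_le hB IH2.
have gu := absM_le hB1 IH3.
have gu' := absM_le hB1' IH3.
have Zb : `|Lsig * (t1 + B * (c_admm lam Lsig Cy Cz Cu R1 R2 n m l).1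
               + (1 + B) * (c_admm lam Lsig Cy Cz Cu R1 R2 n m l).2)|
          <= Lp * (P * rs R m + Q * (K * rs R m) + (1 + Q) * (K * rs R m)).
  rewrite normrM; apply: ler_wpM2l => //.
  apply: (le_trans (ler_normD _ _)); apply: lerD => //.
  by apply: (le_trans (ler_normD _ _)); apply: lerD.
split; [|split].
- rewrite /= sigma0 addr0.
  have -> : Lsig * (c10 R n m + R1 / rs R n) * rs R n * Cy +
     Lsig * (c20 R + R2 / rs R m) * c_ista lam Lsig Cy Cx R1 R2 n m l =
     Lsig * (t1 + B * c_ista lam Lsig Cy Cx R1 R2 n m l) by rewrite /t1 /B; ring.
  rewrite normrM; apply: (le_trans (ler_wpM2l hLp (le_trans (ler_normD _ _) (lerD ht1 gc)))).
  lra.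
- rewrite /= sigma0 addr0.
  have -> : forall c1 c2 : R,
     Lsig * (c10 R n m + R1 / rs R n) * rs R n * Cy +
     Lsig * (c20 R + R2 / rs R m) * c1 + Lsig * (1 + c20 R + R2 / rs R m) * c2 =
     Lsig * (t1 + B * c1 + (1 + B) * c2) by move=> c1 c2; rewrite /t1 /B; ring.
  apply: (le_trans Zb); lra.
- rewrite /= sigma0 addr0.
  have -> : forall c1 c2 : R,
     (c10 R n m + R1 / rs R n) * rs R n * Cy + (c20 R + R2 / rs R m) * c1 +
     (c20 R + R2 / rs R m + 1) * c2 +
     (Lsig * (c10 R n m + R1 / rs R n) * rs R n * Cy +
     Lsig * (c20 R + R2 / rs R m) * c1 + Lsig * (1 + c20 R + R2 / rs R m) * c2) =
     (t1 + B * c1 + (B + 1) * c2) + Lsig * (t1 + B * c1 + (1 + B) * c2)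
     by move=> c1 c2; rewrite /t1 /B; ring.
  apply: (le_trans (ler_normD _ _)).
  have : `|t1 + B * (c_admm lam Lsig Cy Cz Cu R1 R2 n m l).1
               + (B + 1) * (c_admm lam Lsig Cy Cz Cu R1 R2 n m l).2|
          <= P * rs R m + Q * (K * rs R m) + (Q + 1) * (K * rs R m).
    apply: (le_trans (ler_normD _ _)); apply: lerD => //.
    by apply: (le_trans (ler_normD _ _)); apply: lerD.
  move: Zb; lra.
Qed.
End Part2.

Unset Implicit Arguments.
Set Strict Implicit.

Theorem lemma4 (R : realType) (L n : nat) (lam Lsig Cy Cx Cz Cu R1 R2 : R) :
  (1 <= L)%N -> (1 <= n)%N -> 0 < lam ->
  (forall a b : R, `|sigma lam a - sigma lam b| <= Lsig * `|a - b|) ->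
  (* Part 1: deterministic bounds on the event of the operator-norm bounds *)
  (forall (m : nat), (1 <= m)%N ->
   forall (y : 'cV[R]_n) (x0 z0 u0 : 'cV[R]_m)
          (W10 W1 : nat -> 'M[R]_(m, n)) (W20 W2 : nat -> 'M[R]_(m, m)),
   (forall i, `|y i 0| <= Cy) ->
   (forall i, `|x0 i 0| <= Cx) ->
   (forall i, `|z0 i 0| <= Cz) ->
   (forall i, `|u0 i 0| <= Cu) ->
   (forall l, (1 <= l <= L)%N -> opnorm_le (W10 l) (c10 R n m * rs R n)) ->
   (forall l, (1 <= l <= L)%N -> opnorm_le (W20 l) (c20 R * rs R m)) ->
   frobL (fun l => W1 l - W10 l) L <= R1 ->
   frobL (fun l => W2 l - W20 l) L <= R2 ->
   forall l, (1 <= l <= L)%N ->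
     vnorm (lista lam y W1 W2 x0 l) <= c_ista lam Lsig Cy Cx R1 R2 n m l /\
     vnorm (admm lam y W1 W2 z0 u0 l).1 <= (c_admm lam Lsig Cy Cz Cu R1 R2 n m l).1 /\
     vnorm (admm lam y W1 W2 z0 u0 l).2 <= (c_admm lam Lsig Cy Cz Cu R1 R2 n m l).2)
  /\
  (* Part 2: the constants are O(sqrt m) as m -> oo, all other parameters fixed *)
  (forall l, (1 <= l <= L)%N ->
   exists K : R, exists M : nat, forall m : nat, (M <= m)%N ->
     `|c_ista lam Lsig Cy Cx R1 R2 n m l| <= K * rs R m /\
     `|(c_admm lam Lsig Cy Cz Cu R1 R2 n m l).1| <= K * rs R m /\
     `|(c_admm lam Lsig Cy Cz Cu R1 R2 n m l).2| <= K * rs R m).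
Proof.
move=> _ hn _ hL; split.
  exact: (@part1 R L n lam Lsig Cy Cx Cz Cu R1 R2 hn hL).
move=> l _; have [K [_ H]] := @part2 R n lam Lsig Cy Cx Cz Cu R1 R2 hn l.
by exists K, 1%N.
Qed.
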